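(* Consider $N$ agents. For each agent $k$ let $R_{u,k}$ be an $M\times M$ Hermitian positive definite matrix, $c_k\in(0,\infty)$, $\delta_k,r_k\in(0,1)$, and $\chi_k\triangleq\frac{1-\delta_kr_k}{\delta_k(1-r_k)}$, $\chi_{\min}\triangleq\min_k\chi_k$. Let $\mu>0$ with $\mu\lambda_{\max}(R_{u,k})\le1$ for all $k$, and $\rho_{\max}\triangleq\max_k\lambda_{\max}(I-\mu R_{u,k})$. For each $k$ and time $i$, let $\widetilde{\boldsymbol w}_{k,i-1}$ be a random vector in $\mathbb{C}^M$, let $\bar{\boldsymbol b}_k(i)\triangleq\|(I-\mu R_{u,k})\widetilde{\boldsymbol w}_{k,i-1}\|^2_{R_{u,k}}$, and for each neighbor $\ell$ let $\boldsymbol\theta_{\ell k}(i)$ be a random variable with values in $[\varepsilon,1]$ for some $\varepsilon\in(0,1)$. Agent $k$'s action toward $\ell$ is $\boldsymbol a_{k\ell}(i)=1$ if $\bar{\boldsymbol b}_k(i)\boldsymbol\theta_{\ell k}(i)>c_k\chi_k$ and $\boldsymbol a_{k\ell}(i)=0$ otherwise. Suppose there exist a constant $\eta>0$ and an index $i_0$ such that $\mathbb{E}\|\widetilde{\boldsymbol w}_{k,i}\|^2_{R_{u,k}}\le\eta\mu$ for all $k$ and all $i\ge i_0$. Then for every agent $k$, every neighbor $\ell$ and every $i\ge i_0+1$, $${\rm Prob}\{\boldsymbol a_{k\ell}(i)=1\}\le\min\Big\{\frac{c^o}{c_k},1\Big\},\qquad c^o\triangleq\frac{\eta\mu\rho_{\max}^2}{\chi_{\min}},$$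 where $c^o$ does not depend on $c_k$.
   Context: For a Hermitian positive definite $R$, $\|x\|^2_R\triangleq x^*Rx$. In the paper, $\widetilde{\boldsymbol w}_{k,i-1}=w^o-\boldsymbol w_{k,i-1}$ is agent $k$'s estimation error in a diffusion LMS network, $\mu$ the step-size, $R_{u,k}$ the regressor covariance, $c_k$ the per-transmission communication cost, $\delta_k$ a discount factor, $r_k$ the reputation smoothing factor, $\boldsymbol\theta_{\ell k}(i)$ the reputation score agent $k$ keeps about $\ell$ (floored at $\varepsilon$), and the action rule is the agent's (risk-taking) best response rule; the hypothesis on $\eta$ is the paper's steady-state mean-square bound (''after sufficient iterations''). *)

(* Defs.v *)
From HB Require Import structures.
From mathcomp Require Import all_boot all_order all_algebra.
From mathcomp Require Import all_classical all_reals all_analysis.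
From mathcomp Require Import complex.
Set Implicit Arguments. Unset Strict Implicit. Unset Printing Implicit Defensive.
Import Order.TTheory GRing.Theory Num.Theory.
Local Open Scope ring_scope.
Local Open Scope classical_set_scope.

Definition ctr (R : realType) m n (A : 'M[R[i]]_(m, n)) : 'M[R[i]]_(n, m) :=
  map_mx (@conjc R) A^T.

Definition hpd (R : realType) M (A : 'M[R[i]]_M) : Prop :=
  ctr A = A /\ forall x : 'cV[R[i]]_M, x != 0 -> 0 < (ctr x *m A *m x) 0 0.

(* weighted squared norm ||x||^2_A = x^* A x  (real part; it is real for A Hermitian) *)
Definition wnorm2 (R : realType) M (A : 'M[R[i]]_M) (x : 'cV[R[i]]_M) : R :=
  complex.Re ((ctr x *m A *m x) 0 0).

(* largest eigenvalue of a Hermitian matrix (its eigenvalues are real) *)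
Definition lambda_max (R : realType) M (A : 'M[R[i]]_M) : R :=
  sup [set a : R | eigenvalue A (a%:C)%C].

Definition chi (R : realType) (delta r : R) : R :=
  (1 - delta * r) / (delta * (1 - r)).

(* bbar_k(i) = || (I - mu R_{u,k}) wtilde_{k,i-1} ||^2_{R_{u,k}} ;
   [w j] is the error vector wtilde_{k,j} at time j. *)
Definition bbar (R : realType) M (mu : R) (Ru : 'M[R[i]]_M)
    (w : nat -> 'cV[R[i]]_M) (i : nat) : R :=
  wnorm2 Ru ((1%:M - (mu%:C)%C *: Ru) *m w i.-1).

Definition action (R : realType) M (mu : R) (Ru : 'M[R[i]]_M)
    (w : nat -> 'cV[R[i]]_M) (theta c chik : R) (i : nat) : nat :=
  if bbar mu Ru w i * theta > c * chik then 1%N else 0%N.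

(* Main.v *)
Require Import Defs.
From HB Require Import structures.
From mathcomp Require Import all_boot all_order all_algebra.
From mathcomp Require Import all_classical all_reals all_analysis.
From mathcomp Require Import complex.
From mathcomp Require Import ring lra.
Import Order.TTheory GRing.Theory Num.Theory.
Local Open Scope ring_scope.
Local Open Scope classical_set_scope.
Set Implicit Arguments. Unset Strict Implicit. Unset Printing Implicit Defensive.

Section LA.
Variable R : realType.
Local Notation C := (R[i]).

Lemma ReD_ (x y : C) : complex.Re (x + y) = complex.Re x + complex.Re y.
Proof. by case: x; case: y. Qed.
Lemma ImD_ (x y : C) : complex.Im (x + y) = complex.Im x + complex.Im y.
Proof. by case: x; case: y. Qed.
Lemma ReM_ (x y : C) : complex.Re (x * y) = complex.Re x * complex.Re y - complex.Im x * complex.Im y.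
Proof. by case: x; case: y. Qed.
Lemma ImM_ (x y : C) : complex.Im (x * y) = complex.Re x * complex.Im y + complex.Im x * complex.Re y.
Proof. by case: x => a b; case: y => c d /=; rewrite addrC. Qed.
Lemma Re0_ : complex.Re (0 : C) = 0. Proof. by []. Qed.
Lemma Re_sum (I : Type) (r : seq I) (P : pred I) (F : I -> C) :
  complex.Re (\sum_(i <- r | P i) F i) = \sum_(i <- r | P i) complex.Re (F i).
Proof. exact: (big_morph _ ReD_ Re0_). Qed.

Lemma ctrM m n p (A : 'M[C]_(m, n)) (B : 'M[C]_(n, p)) : ctr (A *m B) = ctr B *m ctr A.
Proof. by rewrite /ctr trmx_mul map_mxM. Qed.
Lemma ctrK m n (A : 'M[C]_(m, n)) : ctr (ctr A) = A.
Proof. by apply/matrixP => i j; rewrite !mxE conjcK. Qed.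

Lemma quadE n (Q : 'M[C]_n) (e : 'rV[C]_n) (x : 'cV[C]_n) :
  (ctr x *m (ctr Q *m diag_mx e *m Q) *m x) 0 0 =
  \sum_j conjc ((Q *m x) j 0) * e 0 j * (Q *m x) j 0.
Proof.
have -> : ctr x *m (ctr Q *m diag_mx e *m Q) *m x = ctr (Q *m x) *m diag_mx e *m (Q *m x).
  by rewrite ctrM !mulmxA.
rewrite mul_mx_diag mxE.
by apply: eq_bigr => j _; rewrite !mxE.
Qed.

Lemma Re_quad (e y : C) : complex.Im e = 0 ->
  complex.Re (conjc y * e * y) = complex.Re e * (complex.Re y ^+ 2 + complex.Im y ^+ 2).
Proof. by case: e => a b; case: y => u v /= ->; rewrite /=; ring. Qed.


Section Spec.
Variables (n : nat) (Q : 'M[C]_n).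
Hypothesis hQ1 : Q *m ctr Q = 1%:M.
Hypothesis hQ2 : ctr Q *m Q = 1%:M.

Lemma delta_D (e : 'rV[C]_n) j : (delta_mx 0 j : 'rV[C]_n) *m diag_mx e = e 0 j *: delta_mx 0 j.
Proof.
apply/matrixP => a b; rewrite mul_mx_diag !mxE ord1 eqxx /=.
by case: eqP => [->|_]; rewrite ?mulr0 ?mul0r // mulrC.
Qed.

Lemma eig_conj_diag (e : 'rV[C]_n) a :
  eigenvalue (ctr Q *m diag_mx e *m Q) a -> exists j, a = e 0 j.
Proof.
move=> /eigenvalueP [v hv vn0].
set u := v *m ctr Q.
have hu : u *m diag_mx e = a *: u.
  have := congr1 (mulmx^~ (ctr Q)) hv; rewrite /= -scalemxAl => <-.
  by rewrite /u -!mulmxA hQ1 mulmx1.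
have un0 : u != 0.
  apply: contraNneq vn0 => u0; have : u *m Q = v by rewrite /u -mulmxA hQ2 mulmx1.
  by rewrite u0 mul0mx => <-.
clearbody u.
have [j hj] : exists j, u 0 j != 0.
  have [//|H] := pselect (exists j, u 0 j != 0).
  exfalso; move/eqP: un0; apply; apply/matrixP => a' b; rewrite ord1 [RHS]mxE; apply/eqP/negPn/negP => hb.
  by apply: H; exists b.
exists j; have /matrixP /(_ 0 j) := hu; rewrite mul_mx_diag !mxE => h.
by apply: (mulIf hj); rewrite -h mulrC.
Qed.

Lemma eig_conj_diag2 (e : 'rV[C]_n) j :
  eigenvalue (ctr Q *m diag_mx e *m Q) (e 0 j).
Proof.
apply/eigenvalueP; exists ((delta_mx 0 j : 'rV[C]_n) *m Q).
  by rewrite !mulmxA -(mulmxA _ Q) hQ1 mulmx1 delta_D scalemxAl.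
apply: contra_neq (@oner_neq0 C) => h.
have : ((delta_mx 0 j : 'rV[C]_n) *m Q *m ctr Q) 0 j = 0 by rewrite h mul0mx mxE.
by rewrite -mulmxA hQ1 mulmx1 mxE !eqxx.
Qed.

Lemma lmax_ge (e : 'rV[C]_n) : (forall j, complex.Im (e 0 j) = 0) ->
  forall j, complex.Re (e 0 j) <= lambda_max (ctr Q *m diag_mx e *m Q).
Proof.
move=> eR j; apply: ub_le_sup; last first.
  rewrite /=; have -> : ((complex.Re (e 0 j))%:C)%C = e 0 j.
    by move: (eR j); case: (e 0 j) => a b /= ->.
  exact: eig_conj_diag2.
exists (\sum_k `|complex.Re (e 0 k)|) => a /= /eig_conj_diag [k hk].
have -> : a = complex.Re (e 0 k) by rewrite -hk.
apply: le_trans (real_ler_norm _) _; first exact: num_real.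
by rewrite (bigD1 k) //= lerDl sumr_ge0.
Qed.
End Spec.

Lemma ReN_ (x : C) : complex.Re (- x) = - complex.Re x. Proof. by case: x. Qed.
Lemma ImN_ (x : C) : complex.Im (- x) = - complex.Im x. Proof. by case: x. Qed.
Lemma Re1_ : complex.Re (1 : C) = 1. Proof. by []. Qed.
Lemma Im1_ : complex.Im (1 : C) = 0. Proof. by []. Qed.
Lemma ReR_ (a : R) : complex.Re (a%:C)%C = a. Proof. by []. Qed.
Lemma ImR_ (a : R) : complex.Im (a%:C)%C = 0. Proof. by []. Qed.
Lemma Rej_ (x : C) : complex.Re (conjc x) = complex.Re x. Proof. by case: x. Qed.
Lemma Imj_ (x : C) : complex.Im (conjc x) = - complex.Im x. Proof. by case: x. Qed.

Lemma Im_quad (e y : C) : complex.Im e = 0 -> complex.Im (conjc y * e * y) = 0.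
Proof. by case: e => a b; case: y => u v /= ->; rewrite /=; ring. Qed.

Lemma diag_mul n (a b : 'rV[C]_n) : diag_mx a *m diag_mx b = diag_mx (\row_j (a 0 j * b 0 j)).
Proof.
apply/matrixP => i j; rewrite mul_diag_mx !mxE.
by case: eqP => [->|_]; rewrite ?mulr0 ?mulr1n ?mulr0n.
Qed.

Lemma ctr_diag n (a : 'rV[C]_n) : ctr (diag_mx a) = diag_mx (map_mx conjc a).
Proof. by rewrite /ctr tr_diag_mx map_diag_mx. Qed.

Lemma wnorm2_ge0 n (H : 'M[C]_n) x : hpd H -> 0 <= wnorm2 H x.
Proof.
case=> _ hp; have [->|xn0] := eqVneq x 0.
  by rewrite /wnorm2 mulmx0 mxE.
have := hp x xn0; rewrite ltcE => /andP[_ h]; exact: ltW.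
Qed.

Lemma key n (H : 'M[C]_n) (mu rho : R) (x : 'cV[C]_n) :
  hpd H -> 0 < mu -> mu * lambda_max H <= 1 ->
  lambda_max (1%:M - (mu%:C)%C *: H) <= rho ->
  wnorm2 H ((1%:M - (mu%:C)%C *: H) *m x) <= rho ^+ 2 * wnorm2 H x.
Proof.
case=> hH hp mu0 hmu hrho.
set Q := spectralmx H; set d := spectral_diag H.
have QU : Q \is unitarymx := spectral_unitarymx H.
have hQ1 : Q *m ctr Q = 1%:M := unitarymxP QU.
have hQ2 : ctr Q *m Q = 1%:M.
  by have := mulVmx (spectral_unit H); rewrite invmx_unitary.
have Hn : H \is normalmx.
  by apply/normalmxP; change (H *m ctr H = ctr H *m H); rewrite hH.
have hHe : H = ctr Q *m diag_mx d *m Q.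
  by have /orthomx_spectralP := Hn; rewrite invmx_unitary.
have hd : forall j, 0 < d 0 j.
  move=> j; set y := ctr Q *m (delta_mx j 0 : 'cV[C]_n).
  have hy : Q *m y = delta_mx j 0 by rewrite /y mulmxA hQ1 mul1mx.
  have yn0 : y != 0.
    apply: contra_neq (@oner_neq0 C) => h.
    by have := congr1 (fun M : 'cV[C]_n => M j 0) hy; rewrite h mulmx0 !mxE !eqxx.
  have := hp y yn0; rewrite hHe quadE hy (bigD1 j) //= big1.
    rewrite !mxE !eqxx /= addr0.
    have -> : (1 -i* 0)%C = 1 :> C by apply/eqP; rewrite eq_complex /= oppr0 !eqxx.
    by rewrite mul1r mulr1.
  by move=> k /negPf hk; rewrite !mxE hk /= mulr0.
have dR : forall j, complex.Im (d 0 j) = 0.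
  by move=> j; have := hd j; rewrite ltcE => /andP[/eqP -> _].
have dpos : forall j, 0 < complex.Re (d 0 j).
  by move=> j; have := hd j; rewrite ltcE => /andP[_ ->].
set e : 'rV[C]_n := \row_j (1 - (mu%:C)%C * d 0 j).
have hA : 1%:M - (mu%:C)%C *: H = ctr Q *m diag_mx e *m Q.
  have -> : diag_mx e = 1%:M - (mu%:C)%C *: diag_mx d.
    apply/matrixP => i j; rewrite !mxE.
    by case: (i == j); rewrite ?mulr1n ?mulr0n ?mulr0 ?subr0.
  by rewrite mulmxBr mulmxBl mulmx1 hQ2 -scalemxAr -scalemxAl -hHe.
have eI : forall j, complex.Im (e 0 j) = 0.
  by move=> j; rewrite mxE ImD_ ImN_ ImM_ Im1_ ImR_ dR; ring.
have eRe : forall j, complex.Re (e 0 j) = 1 - mu * complex.Re (d 0 j).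
  by move=> j; rewrite mxE ReD_ ReN_ ReM_ Re1_ ReR_ ImR_; ring.
have bd : forall j, complex.Re (d 0 j) <= lambda_max H.
  by move=> j; rewrite hHe; apply: lmax_ge.
have be : forall j, complex.Re (e 0 j) <= rho.
  by move=> j; apply: le_trans hrho; rewrite hA; apply: lmax_ge.
set f : 'rV[C]_n := \row_j (conjc (e 0 j) * d 0 j * e 0 j).
rewrite hA /wnorm2.
have -> : ctr (ctr Q *m diag_mx e *m Q *m x) *m H *m (ctr Q *m diag_mx e *m Q *m x)
    = ctr x *m (ctr Q *m diag_mx f *m Q) *m x.
  have hK : forall m (Y : 'M[C]_(m, n)), Y *m Q *m ctr Q = Y.
    by move=> m Y; rewrite -mulmxA hQ1 mulmx1.
  rewrite hHe !ctrM ctrK !mulmxA !hK; congr (_ *m Q *m x).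
  rewrite -!mulmxA; congr (_ *m (_ *m _)).
  rewrite ctr_diag !diag_mul; congr diag_mx; apply/matrixP => i j.
  by rewrite !mxE mulrA.
rewrite hHe !quadE !Re_sum mulr_sumr; apply: ler_sum => j _.
have fI : complex.Im (f 0 j) = 0 by rewrite mxE Im_quad.
rewrite !Re_quad // mxE Re_quad // eI expr0n /= addr0 eRe.
have h1 : 0 <= 1 - mu * complex.Re (d 0 j).
  rewrite subr_ge0; apply: le_trans hmu; rewrite ler_pM2l //.
have h2 : 1 - mu * complex.Re (d 0 j) <= rho by rewrite -eRe.
set a := 1 - _; set b := complex.Re (d 0 j).
set m := _ + _.
have m0 : 0 <= m by rewrite /m addr_ge0 // sqr_ge0.
have a2 : a ^+ 2 <= rho ^+ 2 by rewrite ler_pXn2r // ?nnegrE //; exact: le_trans h2.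
have b0 : 0 <= b := ltW (dpos j).
rewrite mulrA; apply: ler_wpM2r => //; rewrite mulrC; apply: ler_wpM2r => //.
Qed.

End LA.

Section Meas.
Variables (R : realType) (d : measure_display) (T : measurableType d).
Local Notation C := (R[i]).

Definition mC (f : T -> C) := measurable_fun setT (fun x => complex.Re (f x)) /\
  measurable_fun setT (fun x => complex.Im (f x)).

Lemma mC_cst (a : C) : mC (fun _ => a).
Proof. by split; apply: measurable_cst. Qed.

Lemma mC_add f g : mC f -> mC g -> mC (fun x => f x + g x).
Proof.
move=> [f1 f2] [g1 g2]; split.
  by under eq_fun do rewrite ReD_; exact: measurable_realfun.measurable_funD.
by under eq_fun do rewrite ImD_; exact: measurable_realfun.measurable_funD.
Qed.

Lemma mC_mul f g : mC f -> mC g -> mC (fun x => f x * g x).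
Proof.
move=> [f1 f2] [g1 g2]; split.
  under eq_fun do rewrite ReM_.
  by apply: measurable_realfun.measurable_funB; apply: measurable_realfun.measurable_funM.
under eq_fun do rewrite ImM_.
by apply: measurable_realfun.measurable_funD; apply: measurable_realfun.measurable_funM.
Qed.

Lemma mC_conj f : mC f -> mC (fun x => conjc (f x)).
Proof.
move=> [f1 f2]; split; first by under eq_fun do rewrite Rej_.
by under eq_fun do rewrite Imj_; exact: measurable_realfun.measurable_funN.
Qed.

Lemma mC_sum (I : Type) (r : seq I) (P : pred I) (F : I -> T -> C) :
  (forall i, mC (F i)) -> mC (fun x => \sum_(i <- r | P i) F i x).
Proof.
move=> hF; elim: r => [|a r IH].
  by under eq_fun do rewrite big_nil; exact: mC_cst.
case: (boolP (P a)) => Pa.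
  under eq_fun do rewrite big_cons Pa.
  exact: mC_add.
by under eq_fun do rewrite big_cons (negPf Pa).
Qed.

Definition mCv {n} (v : T -> 'cV[C]_n) := forall j, mC (fun x => v x j 0).

Lemma mCv_mul n (B : 'M[C]_n) (v : T -> 'cV[C]_n) : mCv v -> mCv (fun x => B *m v x).
Proof.
move=> hv j; under eq_fun do rewrite mxE.
apply: mC_sum => k; apply: mC_mul; [exact: mC_cst | exact: hv].
Qed.

Lemma m_wnorm2 n (H : 'M[C]_n) (v : T -> 'cV[C]_n) : mCv v ->
  measurable_fun setT (fun x => wnorm2 H (v x)).
Proof.
move=> hv; rewrite /wnorm2.
suff : mC (fun x => (ctr (v x) *m H *m v x) 0 0) by case.
under eq_fun do rewrite mxE.
apply: mC_sum => j; apply: mC_mul; last exact: hv.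
under eq_fun do rewrite mxE.
apply: mC_sum => k; apply: mC_mul; last exact: mC_cst.
under eq_fun do rewrite !mxE.
by apply: mC_conj; exact: hv.
Qed.
End Meas.
Unset Implicit Arguments. Set Strict Implicit.
Theorem theorem1 (R : realType) (N M : nat)
  (Ru : 'I_N -> 'M[R[i]]_M) (c delta r : 'I_N -> R) (mu eps eta : R) (i0 : nat)
  (d : measure_display) (T : measurableType d) (P : probability T R)
  (w : nat -> 'I_N -> T -> 'cV[R[i]]_M)
  (theta : nat -> 'I_N -> 'I_N -> T -> R) :
  (forall k, hpd (Ru k)) ->
  (forall k, 0 < c k) ->
  (forall k, 0 < delta k < 1) ->
  (forall k, 0 < r k < 1) ->
  0 < mu ->
  (forall k, mu * lambda_max (Ru k) <= 1) ->
  0 < eps < 1 ->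
  (* wtilde_{k,i} is a random vector of C^M *)
  (forall i k (j : 'I_M),
      measurable_fun setT (fun x => complex.Re (w i k x j ord0)) /\
      measurable_fun setT (fun x => complex.Im (w i k x j ord0))) ->
  (* theta_{lk}(i) is a random variable with values in [eps, 1] *)
  (forall i l k, measurable_fun setT (theta i l k)) ->
  (forall i l k x, eps <= theta i l k x <= 1) ->
  0 < eta ->
  (forall k i, (i0 <= i)%N ->
     (\int[P]_x (wnorm2 (Ru k) (w i k x))%:E <= (eta * mu)%:E)%E) ->
  let chimin := inf (range (fun k => chi (delta k) (r k))) in
  let rhomax := sup (range (fun k => lambda_max (1%:M - (mu%:C)%C *: Ru k))) in
  let co := eta * mu * rhomax ^+ 2 / chimin in
  forall (k l : 'I_N) (i : nat), (i0.+1 <= i)%N ->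
    (P [set x | action mu (Ru k) (fun j => w j k x) (theta i l k x) (c k)
                       (chi (delta k) (r k)) i = 1%N]
     <= (Num.min (co / c k) 1)%:E)%E.
Proof.
move=> hpd c0 hdel hr mu0 hmu heps hw hth hthb eta0 hint chimin rhomax co k l i hi.
set A := 1%:M - (mu%:C)%C *: Ru k.
have hrho : lambda_max A <= rhomax.
  apply: ub_le_sup; last by exists k.
  exists (\sum_j `|lambda_max (1%:M - (mu%:C)%C *: Ru j)|) => _ [j _ <-].
  apply: le_trans (real_ler_norm _) _; first exact: num_real.
  by rewrite (bigD1 j) //= lerDl sumr_ge0.
have chi1 : forall j, 1 <= chi (delta j) (r j).
  move=> j; rewrite /chi; have /andP[d0 d1] := hdel j; have /andP[r0 r1] := hr j.
  rewrite ler_pdivlMr ?mulr_gt0 ?subr_gt0 // mul1r; nra.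
have chim1 : 1 <= chimin.
  apply: lb_le_inf; first by exists (chi (delta k) (r k)), k.
  by move=> _ [j _ <-].
have chimk : chimin <= chi (delta k) (r k).
  apply: ge_inf; last by exists k.
  by exists 1 => _ [j _ <-].
set i' := i.-1.
have hi' : (i0 <= i')%N by rewrite /i'; move: hi; case: (i) => //.
set v := fun x => w i' k x.
have mv : mCv v by move=> j; exact: hw.
set f := fun x => wnorm2 (Ru k) (v x).
have mf : measurable_fun setT f := m_wnorm2 _ mv.
set g := fun x => wnorm2 (Ru k) (A *m v x).
have mg : measurable_fun setT g := m_wnorm2 (Ru k) (mCv_mul A mv).
have mgt : measurable_fun setT (fun x => g x * theta i l k x).
  exact: measurable_realfun.measurable_funM.
set a := c k * chi (delta k) (r k).
set E' := (fun x => g x * theta i l k x) @^-1` `]a, +oo[.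
have hE : [set x | action mu (Ru k) (fun j => w j k x) (theta i l k x) (c k)
                       (chi (delta k) (r k)) i = 1%N] = E'.
  apply/seteqP; split => x /=.
    rewrite /action; case: ifP => // h _; rewrite /E' /preimage /= in_itv /= andbT; exact: h.
  rewrite /E' /preimage /= in_itv /= andbT => h.
  have h' : (c k * chi (delta k) (r k) < bbar mu (Ru k) (fun j => w j k x) i * theta i l k x) := h.
  by rewrite /action h'.
have mE : measurable E'.
  by have := mgt measurableT _ (measurable_itv `]a, +oo[%R); rewrite setTI.
have gf : forall x, g x <= rhomax ^+ 2 * f x.
  by move=> x; apply: key.
have f0 : forall x, 0 <= f x by move=> x; apply: wnorm2_ge0.
have g0 : forall x, 0 <= g x by move=> x; apply: wnorm2_ge0.
have a0 : 0 <= a by rewrite /a; apply: mulr_ge0; [exact: ltW | exact: le_trans ler01 (chi1 k)].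
have pw : forall x, a * \1_E' x <= rhomax ^+ 2 * f x.
  move=> x; rewrite /indic; case: (boolP (x \in E')) => hx.
    have t1 : theta i l k x <= 1 by case/andP: (hthb i l k x).
    rewrite mulr1; apply: le_trans (gf x); apply: le_trans (ler_piMr (g0 x) t1).
    move: hx; rewrite inE /E' /preimage /= in_itv /= andbT; exact: ltW.
  by rewrite mulr0 mulr_ge0 ?sqr_ge0.
have I1 : (\int[P]_x ((a * \1_E' x)%:E) = a%:E * P E')%E.
  under eq_integral do rewrite EFinM.
  rewrite ge0_integralZl_EFin //.
  - by rewrite integral_indic // setIT.
  - apply/measurable_realfun.measurable_EFinP. exact/(measurable_realfun.measurable_indicP R).
have I2 : (\int[P]_x ((rhomax ^+ 2 * f x)%:E) = (rhomax ^+ 2)%:E * \int[P]_x (f x)%:E)%E.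
  under eq_integral do rewrite EFinM.
  rewrite ge0_integralZl_EFin //.
  all: try by move=> x _; rewrite lee_fin.
  all: try by apply/measurable_realfun.measurable_EFinP.
  exact: sqr_ge0.
have I3 : (\int[P]_x ((a * \1_E' x)%:E) <= \int[P]_x ((rhomax ^+ 2 * f x)%:E))%E.
  apply: ge0_le_integral => //.
  - by move=> x _; rewrite lee_fin mulr_ge0 // indic_ge0.
  - apply/measurable_realfun.measurable_EFinP; apply: measurable_realfun.measurable_funM.
      exact: measurable_cst.
    exact: measurable_realfun.measurable_indic.
  - by apply/measurable_realfun.measurable_EFinP; apply: measurable_realfun.measurable_funM => //; exact: measurable_cst.
  - by move=> x _; rewrite lee_fin.
have I4 : (a%:E * P E' <= (rhomax ^+ 2 * (eta * mu))%:E)%E.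
  rewrite -I1 EFinM; apply: le_trans I3 _; rewrite I2.
  by apply: lee_wpmul2l; [rewrite lee_fin sqr_ge0 | exact: hint].
have PE : P E' = (fine (P E'))%:E by rewrite fineK // fin_num_measure.
set p := fine (P E') in PE.
have p0 : 0 <= p by rewrite -lee_fin -PE measure_ge0.
have p1 : p <= 1 by rewrite -lee_fin -PE probability_le1.
rewrite hE PE lee_fin le_min p1 andbT.
move: I4; rewrite PE -EFinM lee_fin => I4.
have chim0 : 0 < chimin by apply: lt_le_trans chim1; exact: ltr01.
rewrite /co ler_pdivlMr // ler_pdivlMr //.
have : p * c k * chimin <= p * c k * chi (delta k) (r k).
  by rewrite ler_wpM2l // mulr_ge0 // ltW.
rewrite /a in I4; nra.
Qed.
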